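(* Let $f$ be a critically coalescing quadratic rational map with critical points $c_1,c_2$. Then $\mathrm{Deck}(f^2)\cong V_4$, and the three special pairs of $\mathrm{Deck}(f^2)$ are exactly $\mathcal{C}_f=\{c_1,c_2\}$, $f^{-1}(c_1)$ and $f^{-1}(c_2)$.
   Context: A quadratic rational map with critical values $v_1\neq v_2$ is critically coalescing if $f(v_1)=f(v_2)$. $\mathrm{Deck}(F)=\{\tau \text{ Möbius} : F\circ\tau=F\}$. For a group $G\cong V_4$ (Klein four-group) of Möbius transformations, each of its three non-identity elements is an involution with exactly two fixed points in $\hat{\mathbb{C}}$; these three pairs of fixed points (six points in total) are called the special pairs of $G$. *)

(* Defs.v *)
From HB Require Import structures.
From mathcomp Require Import all_boot all_order all_algebra.
From mathcomp Require Import complex reals.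
Set Implicit Arguments. Unset Strict Implicit. Unset Printing Implicit Defensive.
Import Order.TTheory GRing.Theory Num.Theory.
Local Open Scope ring_scope.

Section Sphere.
Variable R : realType.
Local Notation C := R[i].

(* The Riemann sphere: [Some z] is the finite point z, [None] is infinity. *)
Definition sphere := option C.

Definition hom (p : sphere) : C * C :=
  match p with Some z => (z, 1) | None => (1, 0) end.

Definition proj (uv : C * C) : sphere :=
  if uv.2 == 0 then None else Some (uv.1 / uv.2).

(* A quadratic rational map given by its homogeneous lift
   F(x,y) = (a2 x^2 + a1 x y + a0 y^2, b2 x^2 + b1 x y + b0 y^2). *)
Record qrat := QRat { qa0 : C; qa1 : C; qa2 : C; qb0 : C; qb1 : C; qb2 : C }.

Definition qlift (F : qrat) (xy : C * C) : C * C :=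
  let: (x, y) := xy in
  (qa2 F * x ^+ 2 + qa1 F * x * y + qa0 F * y ^+ 2,
   qb2 F * x ^+ 2 + qb1 F * x * y + qb0 F * y ^+ 2).

(* The two forms have no common zero on P^1, i.e. F has degree exactly 2. *)
Definition is_quadratic (F : qrat) : Prop :=
  forall p : sphere, qlift F (hom p) <> (0, 0).

Definition qmap (F : qrat) (p : sphere) : sphere := proj (qlift F (hom p)).

(* Jacobian determinant of the homogeneous lift at (x,y). *)
Definition qjac (F : qrat) (xy : C * C) : C :=
  let: (x, y) := xy in
  (2%:R * qa2 F * x + qa1 F * y) * (qb1 F * x + 2%:R * qb0 F * y)
  - (qa1 F * x + 2%:R * qa0 F * y) * (2%:R * qb2 F * x + qb1 F * y).

Definition is_critical (F : qrat) (p : sphere) : Prop := qjac F (hom p) = 0.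

Definition mobius_act (a b c d : C) (p : sphere) : sphere :=
  let: (x, y) := hom p in proj (a * x + b * y, c * x + d * y).

Definition is_mobius (g : sphere -> sphere) : Prop :=
  exists a b c d : C, a * d - b * c != 0 /\ forall p, g p = mobius_act a b c d p.

Definition Deck (f : sphere -> sphere) (tau : sphere -> sphere) : Prop :=
  is_mobius tau /\ forall p, f (tau p) = f p.

End Sphere.

(* Main.v *)
Require Import Defs.
From HB Require Import structures.
From mathcomp Require Import all_boot all_order all_algebra.
From mathcomp Require Import complex reals.
From mathcomp Require Import ring lra.
Import Order.TTheory GRing.Theory Num.Theory.
Local Open Scope ring_scope.
Set Implicit Arguments. Unset Strict Implicit. Unset Printing Implicit Defensive.

Section Aux.
Variable R : realType.
Local Notation C := R[i].
Local Notation sph := (sphere R).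
Local Notation hom := Defs.hom.
Local Notation proj := Defs.proj.

Definition cr (u v : C * C) : C := u.1 * v.2 - u.2 * v.1.
Definition nz (u : C * C) : Prop := u.1 != 0 \/ u.2 != 0.
Definition scal (l : C) (u : C * C) : C * C := (l * u.1, l * u.2).

Lemma nz_hom (p : sph) : nz (hom p).
Proof. case: p => [z|] /=; [right|left]; exact: oner_neq0. Qed.

Lemma proj_hom (p : sph) : proj (hom p) = p.
Proof.
case: p => [z|]; rewrite /proj /= ?oner_eq0 ?eqxx //.
by rewrite divr1.
Qed.

Lemma proj_eqP (u v : C * C) : nz u -> nz v -> (proj u = proj v <-> cr u v = 0).
Proof.
case: u => u1 u2; case: v => v1 v2; rewrite /nz /cr /proj /=.
have [->|h2] := eqVneq u2 0; have [->|h4] := eqVneq v2 0; rewrite ?eqxx ?(negbTE h2) ?(negbTE h4).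
- move=> _ _; split=> // _; ring.
- case=> // h1 _; split=> // /eqP; rewrite mul0r subr0 mulf_eq0 (negbTE h1) (negbTE h4).
  by [].
- move=> _; case=> // h3; split=> // /eqP; rewrite mulr0 sub0r oppr_eq0 mulf_eq0 (negbTE h2) (negbTE h3).
  by [].
- move=> _ _; split.
  + case=> e. have e3 : u1 * v2 = v1 * u2.
      have -> : u1 * v2 = u1 / u2 * (u2 * v2) by field.
      by rewrite e; field.
    by rewrite e3; ring.
  + move=> e; congr Some.
    apply/eqP; rewrite eqr_div //; apply/eqP.
    by apply/eqP; rewrite -subr_eq0; apply/eqP; rewrite -e; ring.
Qed.

Lemma proj_scal (l : C) (u : C * C) : l != 0 -> proj (scal l u) = proj u.
Proof.
case: u => u1 u2 hl; rewrite /proj /scal /= mulf_eq0 (negbTE hl) /=.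
case: eqP => // h; congr Some; field; apply/andP; split=> //; exact/eqP.
Qed.

Lemma hom_proj (u : C * C) : nz u -> exists l, l != 0 /\ hom (proj u) = scal l u.
Proof.
case: u => u1 u2; rewrite /nz /proj /scal /=.
have [->|h2] := eqVneq u2 0.
- case=> // h1; exists (u1^-1); split; first by rewrite invr_eq0.
  by rewrite /= mulVf // mulr0.
- move=> _; exists (u2^-1); split; first by rewrite invr_eq0.
  by rewrite /= mulVf // mulrC.
Qed.

Lemma qlift_scal (F : qrat R) l u : qlift F (scal l u) = scal (l ^+ 2) (qlift F u).
Proof. case: u => u1 u2; rewrite /qlift /scal /=; congr pair; ring. Qed.

Lemma nz_scal l u : l != 0 -> nz u -> nz (scal l u).
Proof. move=> hl; rewrite /nz /scal /= !mulf_eq0 (negbTE hl) /=; by []. Qed.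

Lemma nzP (u : C * C) : nz u <-> u <> (0, 0).
Proof.
case: u => u1 u2; rewrite /nz /=; split.
- by case=> /negP h [] e1 e2; apply: h; rewrite ?e1 ?e2.
- move=> h; case: (eqVneq u1 0) => [e1|]; last by left.
  case: (eqVneq u2 0) => [e2|]; last by right.
  by exfalso; apply: h; rewrite e1 e2.
Qed.

Lemma qlift_nz (F : qrat R) u : is_quadratic F -> nz u -> nz (qlift F u).
Proof.
move=> hq hu; have [l [hl e]] := hom_proj hu.
have := hq (proj u); rewrite e qlift_scal -nzP => h.
case: h; rewrite /scal /= mulf_eq0 negb_or => /andP [] _ ?; [left|right] => //.
Qed.

Lemma qmap_proj (F : qrat R) u : nz u -> qmap F (proj u) = proj (qlift F u).
Proof.
move=> hu; have [l [hl e]] := hom_proj hu.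
rewrite /qmap e qlift_scal proj_scal // expf_neq0 //.
Qed.

Lemma qmap2 (F : qrat R) p : is_quadratic F ->
  qmap F (qmap F p) = proj (qlift F (qlift F (hom p))).
Proof. move=> hq; rewrite [qmap F p]/qmap qmap_proj //; apply: qlift_nz => //; exact: nz_hom. Qed.

Definition mact (m : (C * C) * (C * C)) (u : C * C) : C * C :=
  (m.1.1 * u.1 + m.1.2 * u.2, m.2.1 * u.1 + m.2.2 * u.2).
Definition mdet (m : (C * C) * (C * C)) : C := m.1.1 * m.2.2 - m.1.2 * m.2.1.
Definition mob m (p : sph) : sph := proj (mact m (hom p)).

Lemma mobius_mob a b c d p : mobius_act a b c d p = mob ((a, b), (c, d)) p.
Proof. by rewrite /mobius_act /mob; case: (hom p). Qed.

Lemma mact_scal m l u : mact m (scal l u) = scal l (mact m u).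
Proof. rewrite /mact /scal /=; congr pair; ring. Qed.

Lemma mact_nz m u : mdet m != 0 -> nz u -> nz (mact m u).
Proof.
case: m => [[a b] [c d]]; case: u => x y; rewrite /mdet /nz /mact /= => hd hu.
case: (eqVneq (a * x + b * y) 0) => e1; last by left.
case: (eqVneq (c * x + d * y) 0) => e2; last by right.
exfalso; case: hu => /eqP; apply.
- have : d * (a * x + b * y) - b * (c * x + d * y) = 0 by rewrite e1 e2; ring.
  have -> : d * (a * x + b * y) - b * (c * x + d * y) = (a * d - b * c) * x by ring.
  by move/eqP; rewrite mulf_eq0 (negbTE hd) => /eqP.
- have : a * (c * x + d * y) - c * (a * x + b * y) = 0 by rewrite e1 e2; ring.
  have -> : a * (c * x + d * y) - c * (a * x + b * y) = (a * d - b * c) * y by ring.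
  by move/eqP; rewrite mulf_eq0 (negbTE hd) => /eqP.
Qed.

Lemma mob_proj m u : nz u -> mob m (proj u) = proj (mact m u).
Proof.
move=> hu; have [l [hl e]] := hom_proj hu.
by rewrite /mob e mact_scal proj_scal.
Qed.

Definition mmul (m n : (C * C) * (C * C)) : (C * C) * (C * C) :=
  ((m.1.1 * n.1.1 + m.1.2 * n.2.1, m.1.1 * n.1.2 + m.1.2 * n.2.2),
   (m.2.1 * n.1.1 + m.2.2 * n.2.1, m.2.1 * n.1.2 + m.2.2 * n.2.2)).
Definition sq (u : C * C) : C * C := (u.1 ^+ 2, u.2 ^+ 2).
Definition N0 : (C * C) * (C * C) := ((1, 0), (0, 1)).
Definition N1 : (C * C) * (C * C) := ((-1, 0), (0, 1)).
Definition N2 (r : C) : (C * C) * (C * C) := ((0, r), (1, 0)).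
Definition N3 (r : C) : (C * C) * (C * C) := ((0, -r), (1, 0)).

Lemma fiber_alg a b c d q11 q21 r (w u : C * C) :
  let Q := ((q11, - (r * q11)), (q21, r * q21)) in
  let A := ((a, b), (c, d)) in
  cr (mact A (sq (mact Q (sq w)))) (mact A (sq (mact Q (sq u)))) =
  (a * d - b * c) * (2%:R * r * q11 * q21) * (2%:R * q11 * q21) *
  (cr w (mact N0 u) * cr w (mact N1 u) * cr w (mact (N2 r) u) * cr w (mact (N3 r) u)).
Proof. case: w => w1 w2; case: u => u1 u2; rewrite /cr /mact /sq /=. ring. Qed.

Lemma conj_cr (x1 y1 x2 y2 : C) N (y x : C * C) :
  let M := ((x2, x1), (y2, y1)) in let adjM := ((y1, -x1), (-y2, x2)) in
  cr y (mact (mmul M (mmul N adjM)) x) = cr (mact adjM y) (mact N (mact adjM x)).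
Proof. case: y => ? ?; case: x => ? ?; rewrite /cr /mact /mmul /=. ring. Qed.
Lemma quad_poly_eval (a b c z : C) : (Poly [:: c; b; a]).[z] = a * z ^+ 2 + b * z + c.
Proof. rewrite horner_Poly /=. ring. Qed.

Lemma quad_poly0 (a b c : C) : Poly [:: c; b; a] = 0 -> [/\ a = 0, b = 0 & c = 0].
Proof.
move=> h; have hc k : [:: c; b; a]`_k = 0 by rewrite -coef_Poly h coef0.
by split; [exact: (hc 2%N) | exact: (hc 1%N) | exact: (hc 0%N)].
Qed.

Lemma poly_all_roots (p : {poly C}) : (forall z, p.[z] = 0) -> p = 0.
Proof.
move=> h; apply: (@roots_geq_poly_eq0 _ p [seq i%:R | i <- iota 0 (size p)]).
- by apply/allP => z _; rewrite /root h.
- rewrite map_inj_uniq ?iota_uniq // => i j /eqP; rewrite eqr_nat => /eqP //.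
- by rewrite size_map size_iota.
Qed.

Lemma quad4 (a0 b0 c0 a1 b1 c1 a2 b2 c2 a3 b3 c3 : C) :
  (forall z, (a0 * z ^+ 2 + b0 * z + c0) * (a1 * z ^+ 2 + b1 * z + c1) *
             (a2 * z ^+ 2 + b2 * z + c2) * (a3 * z ^+ 2 + b3 * z + c3) = 0) ->
  [/\ a0 = 0, b0 = 0 & c0 = 0] \/ [/\ a1 = 0, b1 = 0 & c1 = 0] \/
  [/\ a2 = 0, b2 = 0 & c2 = 0] \/ [/\ a3 = 0, b3 = 0 & c3 = 0].
Proof.
move=> h.
have : Poly [:: c0; b0; a0] * Poly [:: c1; b1; a1] * Poly [:: c2; b2; a2] * Poly [:: c3; b3; a3] = 0.
  by apply: poly_all_roots => z; rewrite !hornerM !quad_poly_eval h.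
move/eqP; rewrite !mulf_eq0 -!orbA => /or4P [] /eqP /quad_poly0; tauto.
Qed.

Lemma jac_id (F : qrat R) (x1 y1 x2 y2 v1 v2 : C) :
  let al := (qlift F (x2, y2)).1 in let ga := (qlift F (x2, y2)).2 in
  let be := (qlift F (x1, y1)).1 in let de := (qlift F (x1, y1)).2 in
  let ga1 := 2%:R * qa2 F * x2 * x1 + qa1 F * (x2 * y1 + x1 * y2) + 2%:R * qa0 F * y2 * y1 in
  let gb1 := 2%:R * qb2 F * x2 * x1 + qb1 F * (x2 * y1 + x1 * y2) + 2%:R * qb0 F * y2 * y1 in
  (x2 * y1 - x1 * y2) * qjac F (mact ((x2, x1), (y2, y1)) (v1, v2)) =
  2%:R * (al * gb1 - ga1 * ga) * v1 ^+ 2 + 4%:R * (al * de - be * ga) * v1 * v2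
  + 2%:R * (ga1 * de - be * gb1) * v2 ^+ 2.
Proof. rewrite /qjac /mact /=. ring. Qed.

Lemma E1 (F : qrat R) (x1 y1 x2 y2 u1 u2 : C) :
  let al := (qlift F (x2, y2)).1 in let ga := (qlift F (x2, y2)).2 in
  let be := (qlift F (x1, y1)).1 in let de := (qlift F (x1, y1)).2 in
  let ga1 := 2%:R * qa2 F * x2 * x1 + qa1 F * (x2 * y1 + x1 * y2) + 2%:R * qa0 F * y2 * y1 in
  let gb1 := 2%:R * qb2 F * x2 * x1 + qb1 F * (x2 * y1 + x1 * y2) + 2%:R * qb0 F * y2 * y1 in
  let u := mact ((y1, -x1), (-y2, x2)) (u1, u2) in
  (x2 * y1 - x1 * y2) ^+ 2 * (qlift F (u1, u2)).1 = al * u.1 ^+ 2 + ga1 * u.1 * u.2 + be * u.2 ^+ 2 /\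
  (x2 * y1 - x1 * y2) ^+ 2 * (qlift F (u1, u2)).2 = ga * u.1 ^+ 2 + gb1 * u.1 * u.2 + de * u.2 ^+ 2.
Proof. rewrite /mact /=. split; ring. Qed.
End Aux.

Section Main.
Variable R : realType.
Local Notation C := R[i].
Local Notation sph := (sphere R).
Local Notation hom := Defs.hom.
Local Notation proj := Defs.proj.
Variable F : qrat R.
Variables c1 c2 : sph.
Hypothesis hq : is_quadratic F.
Hypothesis hcrit : forall p, is_critical F p <-> p = c1 \/ p = c2.
Hypothesis hne : qmap F c1 <> qmap F c2.
Hypothesis hco : qmap F (qmap F c1) = qmap F (qmap F c2).

Let x1 := (hom c1).1. Let y1 := (hom c1).2.
Let x2 := (hom c2).1. Let y2 := (hom c2).2.
Lemma hc1 : hom c1 = (x1, y1). Proof. by rewrite /x1 /y1; case: (hom c1). Qed.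
Lemma hc2 : hom c2 = (x2, y2). Proof. by rewrite /x2 /y2; case: (hom c2). Qed.
Let Mm := ((x2, x1), (y2, y1)).
Let adjm := ((y1, -x1), (-y2, x2)).
Let dM := x2 * y1 - x1 * y2.
Lemma nz1 : nz (x1, y1). Proof. rewrite -hc1; exact: nz_hom. Qed.
Lemma nz2 : nz (x2, y2). Proof. rewrite -hc2; exact: nz_hom. Qed.

Lemma dM_neq0 : dM != 0.
Proof.
apply/eqP => e; apply: hne; congr qmap.
rewrite -(proj_hom c1) -(proj_hom c2) hc1 hc2.
apply/proj_eqP; [exact: nz1 | exact: nz2 |].
by rewrite /cr /=; move: e; rewrite /dM => e; apply/eqP; rewrite -oppr_eq0 -e; apply/eqP; ring.
Qed.

Let al := (qlift F (x2, y2)).1. Let ga := (qlift F (x2, y2)).2.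
Let be := (qlift F (x1, y1)).1. Let de := (qlift F (x1, y1)).2.
Let Del := al * de - be * ga.

Lemma Del_neq0 : Del != 0.
Proof.
apply/eqP => e; apply: hne.
rewrite /qmap hc1 hc2.
have -> : qlift F (x1, y1) = (be, de) by rewrite /be /de; case: (qlift F _).
have -> : qlift F (x2, y2) = (al, ga) by rewrite /al /ga; case: (qlift F _).
apply/proj_eqP.
- have := qlift_nz hq nz1; by rewrite /be /de; case: (qlift F _).
- have := qlift_nz hq nz2; by rewrite /al /ga; case: (qlift F _).
by rewrite /cr /=; apply/eqP; rewrite -oppr_eq0 -(eqP (introT eqP e)); apply/eqP; rewrite /Del; ring.
Qed.

Let ga1 := 2%:R * qa2 F * x2 * x1 + qa1 F * (x2 * y1 + x1 * y2) + 2%:R * qa0 F * y2 * y1.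
Let gb1 := 2%:R * qb2 F * x2 * x1 + qb1 F * (x2 * y1 + x1 * y2) + 2%:R * qb0 F * y2 * y1.

Lemma two_neq0 : (2%:R : C) != 0. Proof. by rewrite pnatr_eq0. Qed.

Lemma g1_0 : ga1 = 0 /\ gb1 = 0.
Proof.
have J1 : qjac F (x1, y1) = 0 by rewrite -hc1; apply/hcrit; left.
have J2 : qjac F (x2, y2) = 0 by rewrite -hc2; apply/hcrit; right.
have h1 := jac_id F x1 y1 x2 y2 0 1.
have h2 := jac_id F x1 y1 x2 y2 1 0.
have E1 : mact ((x2, x1), (y2, y1)) (0, 1) = (x1, y1) by rewrite /mact /=; congr pair; ring.
have E2 : mact ((x2, x1), (y2, y1)) (1, 0) = (x2, y2) by rewrite /mact /=; congr pair; ring.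
move: h1 h2; cbv zeta; rewrite E1 E2 J1 J2 !mulr0 => h1 h2.
have e1 : ga1 * de - be * gb1 = 0.
  have : 2%:R * (ga1 * de - be * gb1) = 0 by rewrite [RHS]h1 /ga1 /gb1 /de /be; ring.
  by move/eqP; rewrite mulf_eq0 (negbTE two_neq0) => /eqP.
have e2 : al * gb1 - ga1 * ga = 0.
  have : 2%:R * (al * gb1 - ga1 * ga) = 0 by rewrite [RHS]h2 /ga1 /gb1 /al /ga; ring.
  by move/eqP; rewrite mulf_eq0 (negbTE two_neq0) => /eqP.
have hD := Del_neq0.
split.
- have : ga1 * Del = 0.
    have -> : ga1 * Del = al * (ga1 * de - be * gb1) + be * (al * gb1 - ga1 * ga) by rewrite /Del; ring.
    by rewrite e1 e2; ring.
  by move/eqP; rewrite mulf_eq0 (negbTE hD) orbF => /eqP.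
- have : gb1 * Del = 0.
    have -> : gb1 * Del = de * (al * gb1 - ga1 * ga) + ga * (ga1 * de - be * gb1) by rewrite /Del; ring.
    by rewrite e1 e2; ring.
  by move/eqP; rewrite mulf_eq0 (negbTE hD) orbF => /eqP.
Qed.

Lemma cr_scal (a b : C) (u v : C * C) : cr (scal a u) (scal b v) = a * b * cr u v.
Proof. rewrite /cr /scal /=; ring. Qed.
Lemma cr_mact (A : (C * C) * (C * C)) (s t : C * C) : cr (mact A s) (mact A t) = mdet A * cr s t.
Proof. rewrite /cr /mact /mdet /=; ring. Qed.
Lemma scal_scal (a b : C) (u : C * C) : scal a (scal b u) = scal (a * b) u.
Proof. rewrite /scal /=; congr pair; ring. Qed.

Let Am := ((al, be), (ga, de)).

Lemma E1s x : scal (dM ^+ 2) (qlift F x) = mact Am (sq (mact adjm x)).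
Proof.
case: x => u1 u2; have [h1 h2] := E1 F x1 y1 x2 y2 u1 u2.
move: h1 h2; cbv zeta; rewrite -/ga1 -/gb1 -/al -/be -/ga -/de.
case: g1_0 => -> -> h1 h2.
rewrite /scal /= /dM h1 h2 /Am /mact /sq /=; congr pair; ring.
Qed.

Let Q := mmul adjm Am.
Let q11 := Q.1.1. Let q12 := Q.1.2. Let q21 := Q.2.1. Let q22 := Q.2.2.

Lemma adjA s : mact adjm (mact Am s) = mact Q s.
Proof. rewrite /mact /Q /mmul /=; congr pair; ring. Qed.

Lemma detQ : q11 * q22 - q12 * q21 = dM * Del.
Proof. rewrite /q11 /q12 /q21 /q22 /Q /mmul /dM /Del /=; ring. Qed.

Lemma FF x : scal (dM ^+ 6) (qlift F (qlift F x)) = mact Am (sq (mact Q (sq (mact adjm x)))).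
Proof.
have e1 := E1s x.
have e2 := E1s (mact Am (sq (mact adjm x))).
rewrite adjA -e1 qlift_scal scal_scal in e2.
by rewrite -e2; congr scal; ring.
Qed.

Lemma nzFF x : nz x -> nz (qlift F (qlift F x)).
Proof. by move=> h; apply: qlift_nz => //; apply: qlift_nz. Qed.

Lemma hcoal : q12 * q21 + q11 * q22 = 0.
Proof.
move: hco; rewrite !qmap2 // hc1 hc2 => /proj_eqP h.
have {h} h : cr (qlift F (qlift F (x1, y1))) (qlift F (qlift F (x2, y2))) = 0.
  by apply: h; apply: nzFF; [exact: nz1 | exact: nz2].
have : cr (scal (dM ^+ 6) (qlift F (qlift F (x1, y1)))) (scal (dM ^+ 6) (qlift F (qlift F (x2, y2)))) = 0.
  by rewrite cr_scal h mulr0.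
rewrite !FF.
have -> : cr (mact Am (sq (mact Q (sq (mact adjm (x1, y1))))))
    (mact Am (sq (mact Q (sq (mact adjm (x2, y2)))))) =
    Del * dM ^+ 8 * ((q12 * q21 - q22 * q11) * (q12 * q21 + q22 * q11)).
  rewrite /cr /mact /sq /Del /dM /q11 /q12 /q21 /q22 /Q /Am /adjm /mmul /=; ring.
have hDd : Del * dM ^+ 8 != 0 by rewrite mulf_neq0 ?expf_neq0 ?Del_neq0 ?dM_neq0.
move/eqP; rewrite mulf_eq0 (negbTE hDd) /= mulf_eq0 => /orP [] /eqP.
- have -> : q12 * q21 - q22 * q11 = - (dM * Del) by rewrite -detQ; ring.
  move/eqP; rewrite oppr_eq0 mulf_eq0 (negbTE Del_neq0) (negbTE dM_neq0) //.
- by move=> e; rewrite -[RHS]e; ring.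
Qed.


Lemma detQ' : 2%:R * q11 * q22 = dM * Del.
Proof. rewrite -detQ; have h := hcoal; rewrite -[LHS]subr0 -h; ring. Qed.

Lemma q11q22_neq0 : q11 * q22 != 0.
Proof.
apply/eqP => e; move: detQ'; rewrite -mulrA e mulr0 => /esym/eqP.
by rewrite mulf_eq0 (negbTE dM_neq0) (negbTE Del_neq0).
Qed.
Lemma q11_neq0 : q11 != 0.
Proof. by move: q11q22_neq0; rewrite mulf_eq0 negb_or => /andP []. Qed.
Lemma q12q21_neq0 : q12 * q21 != 0.
Proof.
have -> : q12 * q21 = - (q11 * q22) by rewrite -[LHS]subr0 -hcoal; ring.
by rewrite oppr_eq0 q11q22_neq0.
Qed.
Lemma q12_neq0 : q12 != 0.
Proof. by move: q12q21_neq0; rewrite mulf_eq0 negb_or => /andP []. Qed.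
Lemma q21_neq0 : q21 != 0.
Proof. by move: q12q21_neq0; rewrite mulf_eq0 negb_or => /andP []. Qed.

Let r := - q12 / q11.
Lemma hq12 : q12 = - (r * q11).
Proof. rewrite /r; field; exact: q11_neq0. Qed.
Lemma hq22 : q22 = r * q21.
Proof.
have e : q11 * q22 = - (q12 * q21) by rewrite -[LHS]subr0 -hcoal; ring.
rewrite /r; transitivity (q11 * q22 / q11); first by field; exact: q11_neq0.
rewrite e; field; exact: q11_neq0.
Qed.
Lemma r_neq0 : r != 0.
Proof. by rewrite /r mulf_neq0 ?oppr_eq0 ?q12_neq0 // invr_neq0 // q11_neq0. Qed.

Lemma Qform : Q = ((q11, - (r * q11)), (q21, r * q21)).
Proof. by rewrite -hq12 -hq22. Qed.

Let S0 := mmul Mm (mmul (@N0 R) adjm).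
Let S1 := mmul Mm (mmul (@N1 R) adjm).
Let S2 := mmul Mm (mmul (N2 r) adjm).
Let S3 := mmul Mm (mmul (N3 r) adjm).
Let K := Del * (2%:R * r * q11 * q21) * (2%:R * q11 * q21).

Lemma K_neq0 : K != 0.
Proof.
rewrite /K; repeat apply: mulf_neq0.
all: try exact: Del_neq0. all: try exact: two_neq0. all: try exact: r_neq0. all: try exact: q11_neq0. all: try exact: q21_neq0.
all: try (rewrite invr_eq0; exact: q11_neq0). all: try (rewrite oppr_eq0; exact: q12_neq0).
Qed.

Lemma fiber_cr x y : dM ^+ 12 * cr (qlift F (qlift F y)) (qlift F (qlift F x)) =
  K * (cr y (mact S0 x) * cr y (mact S1 x) * cr y (mact S2 x) * cr y (mact S3 x)).
Proof.
have -> : dM ^+ 12 * cr (qlift F (qlift F y)) (qlift F (qlift F x)) =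
  cr (scal (dM ^+ 6) (qlift F (qlift F y))) (scal (dM ^+ 6) (qlift F (qlift F x))).
  by rewrite cr_scal; congr (_ * _); ring.
rewrite !FF Qform /Am fiber_alg.
by rewrite /S0 /S1 /S2 /S3 !conj_cr.
Qed.


Lemma mdet_mmul (m n : (C * C) * (C * C)) : mdet (mmul m n) = mdet m * mdet n.
Proof. rewrite /mdet /mmul /=; ring. Qed.

Lemma detS0 : mdet S0 != 0.
Proof.
rewrite /S0 !mdet_mmul; have -> : mdet Mm = dM by [].
have -> : mdet adjm = dM by rewrite /mdet /dM /=; ring.
have -> : mdet (@N0 R) = 1 by rewrite /mdet /=; ring.
by rewrite mul1r mulf_neq0 ?dM_neq0.
Qed.
Lemma detS1 : mdet S1 != 0.
Proof.
rewrite /S1 !mdet_mmul; have -> : mdet Mm = dM by [].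
have -> : mdet adjm = dM by rewrite /mdet /dM /=; ring.
have -> : mdet (@N1 R) = -1 by rewrite /mdet /=; ring.
by rewrite !mulf_neq0 ?dM_neq0 ?oppr_eq0 ?oner_eq0.
Qed.
Lemma detS2 : mdet S2 != 0.
Proof.
rewrite /S2 !mdet_mmul; have -> : mdet Mm = dM by [].
have -> : mdet adjm = dM by rewrite /mdet /dM /=; ring.
have -> : mdet (N2 r) = - r by rewrite /mdet /=; ring.
by rewrite !mulf_neq0 ?dM_neq0 ?oppr_eq0 ?r_neq0.
Qed.
Lemma detS3 : mdet S3 != 0.
Proof.
rewrite /S3 !mdet_mmul; have -> : mdet Mm = dM by [].
have -> : mdet adjm = dM by rewrite /mdet /dM /=; ring.
have -> : mdet (N3 r) = r by rewrite /mdet /=; ring.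
apply: mulf_neq0; [exact: dM_neq0 | apply: mulf_neq0; [exact: r_neq0 | exact: dM_neq0]].
Qed.

Lemma fiber p q : qmap F (qmap F q) = qmap F (qmap F p) <->
  cr (hom q) (mact S0 (hom p)) * cr (hom q) (mact S1 (hom p)) *
  cr (hom q) (mact S2 (hom p)) * cr (hom q) (mact S3 (hom p)) = 0.
Proof.
rewrite !qmap2 // proj_eqP; try (apply: nzFF; exact: nz_hom).
have := fiber_cr (hom p) (hom q); split => h.
- move: H; rewrite h mulr0 => /esym/eqP; rewrite mulf_eq0 (negbTE K_neq0) => /eqP //.
- move: H; rewrite h mulr0 => /eqP; rewrite mulf_eq0 expf_eq0 (negbTE dM_neq0) andbF => /eqP //.
Qed.


Lemma cr_hom_mob (S : (C * C) * (C * C)) p q : mdet S != 0 ->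
  (cr (hom q) (mact S (hom p)) = 0 <-> q = mob S p).
Proof.
move=> hS; rewrite -(proj_eqP (nz_hom q) (mact_nz hS (nz_hom p))) proj_hom /mob //.
Qed.

Lemma mob_comp (S T U : (C * C) * (C * C)) (k : C) p : mdet T != 0 -> k != 0 ->
  (forall x, mact S (mact T x) = scal k (mact U x)) -> mob S (mob T p) = mob U p.
Proof.
move=> hT hk h; rewrite [mob T p]/mob mob_proj; last exact: (mact_nz hT (nz_hom p)).
by rewrite h proj_scal.
Qed.

Lemma mob_id (S : (C * C) * (C * C)) (k : C) p : k != 0 ->
  (forall x, mact S x = scal k x) -> mob S p = p.
Proof. by move=> hk h; rewrite /mob h proj_scal // proj_hom. Qed.

Lemma zero_equiv (a b k l : C) : k != 0 -> l != 0 -> k * a = l * b -> (a = 0 <-> b = 0).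
Proof.
move=> hk hl e; split=> h.
- by move: e; rewrite h mulr0 => /esym/eqP; rewrite mulf_eq0 (negbTE hl) => /eqP.
- by move: e; rewrite h mulr0 => /eqP; rewrite mulf_eq0 (negbTE hk) => /eqP.
Qed.

Lemma eq_c (p c : sph) (xc : C * C) : hom c = xc -> (p = c <-> cr xc (hom p) = 0).
Proof.
move=> hc; split => [->|h]; first by rewrite hc /cr; ring.
rewrite -(proj_hom p) -(proj_hom c) hc; apply/proj_eqP; [exact: nz_hom | rewrite -hc; exact: nz_hom |].
by rewrite /cr -[RHS]oppr0 -h /cr; ring.
Qed.

Lemma mob_fix (S : (C * C) * (C * C)) p : mdet S != 0 -> (mob S p = p <-> cr (mact S (hom p)) (hom p) = 0).
Proof.
move=> hS; rewrite -{2}(proj_hom p) /mob proj_eqP //; [exact: mact_nz hS (nz_hom p) | exact: nz_hom].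
Qed.

Lemma fix1 p : mob S1 p = p <-> p = c1 \/ p = c2.
Proof.
rewrite mob_fix ?detS1 // (eq_c p hc1) (eq_c p hc2).
have -> : cr (mact S1 (hom p)) (hom p) = 2%:R * (cr (x1, y1) (hom p) * cr (x2, y2) (hom p)).
  case: (hom p) => u v; rewrite /cr /mact /S1 /mmul /Mm /adjm /N1 /=; ring.
split.
- move/eqP; rewrite mulf_eq0 (negbTE two_neq0) /= mulf_eq0 => /orP [] /eqP; tauto.
- by case=> ->; ring.
Qed.

Lemma crAm1 s : cr (mact Am s) (x1, y1) = (mact Q s).1.
Proof. rewrite /cr /mact /Q /Am /mmul /adjm /=; ring. Qed.
Lemma crAm2 s : cr (mact Am s) (x2, y2) = - (mact Q s).2.
Proof. rewrite /cr /mact /Q /Am /mmul /adjm /=; ring. Qed.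

Lemma fix2 p : mob S2 p = p <-> qmap F p = c1.
Proof.
rewrite mob_fix ?detS2 // -(proj_hom c1) hc1 /qmap proj_eqP; last exact: nz1; last first.
  apply: qlift_nz => //; exact: nz_hom.
apply: iff_sym; apply: (@zero_equiv _ _ (dM ^+ 2) (- q11)).
- by rewrite expf_neq0 // dM_neq0.
- by rewrite oppr_eq0 q11_neq0.
have -> : dM ^+ 2 * cr (qlift F (hom p)) (x1, y1) = cr (scal (dM ^+ 2) (qlift F (hom p))) (x1, y1).
  by rewrite /cr /scal /=; ring.
rewrite E1s crAm1 Qform.
case: (hom p) => u v; rewrite /cr /mact /sq /S2 /mmul /Mm /adjm /N2 /=; ring.
Qed.

Lemma fix3 p : mob S3 p = p <-> qmap F p = c2.
Proof.
rewrite mob_fix ?detS3 // -(proj_hom c2) hc2 /qmap proj_eqP; last exact: nz2; last first.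
  apply: qlift_nz => //; exact: nz_hom.
apply: iff_sym; apply: (@zero_equiv _ _ (dM ^+ 2) q21).
- by rewrite expf_neq0 // dM_neq0.
- exact: q21_neq0.
have -> : dM ^+ 2 * cr (qlift F (hom p)) (x2, y2) = cr (scal (dM ^+ 2) (qlift F (hom p))) (x2, y2).
  by rewrite /cr /scal /=; ring.
rewrite E1s crAm2 Qform.
case: (hom p) => u v; rewrite /cr /mact /sq /S3 /mmul /Mm /adjm /N3 /=; ring.
Qed.


Lemma S0_id p : mob S0 p = p.
Proof.
apply: (@mob_id _ dM) => [|x]; first exact: dM_neq0.
case: x => u v; rewrite /scal /mact /S0 /mmul /Mm /adjm /N0 /=; congr pair; rewrite /dM; ring.
Qed.

Lemma S11 p : mob S1 (mob S1 p) = p.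
Proof.
rewrite (@mob_comp _ _ S0 dM) ?detS1 ?dM_neq0 ?S0_id //.
case=> u v; rewrite /scal /mact /S0 /S1 /mmul /Mm /adjm /N0 /N1 /=; congr pair; rewrite /dM; ring.
Qed.
Lemma S22 p : mob S2 (mob S2 p) = p.
Proof.
rewrite (@mob_comp _ _ S0 (r * dM)) ?detS2 ?S0_id //; first by rewrite mulf_neq0 ?r_neq0 ?dM_neq0.
case=> u v; rewrite /scal /mact /S0 /S2 /mmul /Mm /adjm /N0 /N2 /=; congr pair; rewrite /dM; ring.
Qed.
Lemma S33 p : mob S3 (mob S3 p) = p.
Proof.
rewrite (@mob_comp _ _ S0 (- r * dM)) ?detS3 ?S0_id //; first by rewrite mulf_neq0 ?oppr_eq0 ?r_neq0 ?dM_neq0.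
case=> u v; rewrite /scal /mact /S0 /S3 /mmul /Mm /adjm /N0 /N3 /=; congr pair; rewrite /dM; ring.
Qed.
Lemma S12 p : mob S1 (mob S2 p) = mob S3 p.
Proof.
rewrite (@mob_comp _ _ S3 dM) ?detS2 ?dM_neq0 //.
case=> u v; rewrite /scal /mact /S3 /S1 /S2 /mmul /Mm /adjm /N1 /N2 /N3 /=; congr pair; rewrite /dM; ring.
Qed.


Definition qa_ (T S : (C * C) * (C * C)) := T.1.1 * S.2.1 - T.2.1 * S.1.1.
Definition qb_ (T S : (C * C) * (C * C)) :=
  T.1.1 * S.2.2 + T.1.2 * S.2.1 - T.2.1 * S.1.2 - T.2.2 * S.1.1.
Definition qc_ (T S : (C * C) * (C * C)) := T.1.2 * S.2.2 - T.2.2 * S.1.2.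

Lemma crTS (T S : (C * C) * (C * C)) x :
  cr (mact T x) (mact S x) = qa_ T S * x.1 ^+ 2 + qb_ T S * x.1 * x.2 + qc_ T S * x.2 ^+ 2.
Proof. rewrite /cr /mact /qa_ /qb_ /qc_ /=; ring. Qed.

Lemma cr_scal_l (l : C) u v : cr (scal l u) v = l * cr u v.
Proof. rewrite /cr /scal /=; ring. Qed.

Lemma mat_eta (m : (C * C) * (C * C)) : ((m.1.1, m.1.2), (m.2.1, m.2.2)) = m.
Proof. by case: m => [[? ?] [? ?]]. Qed.

Lemma tau_eq (T S : (C * C) * (C * C)) p : mdet T != 0 -> mdet S != 0 ->
  qa_ T S = 0 -> qb_ T S = 0 -> qc_ T S = 0 -> mob T p = mob S p.
Proof.
move=> hT hS ea eb ec; rewrite /mob; apply/proj_eqP; try exact: mact_nz (nz_hom p).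
by rewrite crTS ea eb ec; ring.
Qed.

Let f2 := fun p => qmap F (qmap F p).

Lemma deck_in (S : (C * C) * (C * C)) : mdet S != 0 ->
  (forall p, f2 (mob S p) = f2 p) -> Deck f2 (mob S).
Proof.
move=> hS h; split => //; exists S.1.1, S.1.2, S.2.1, S.2.2; split => // p.
by rewrite mobius_mob mat_eta.
Qed.

Lemma deck_char tau : Deck f2 tau <->
  ((forall p, tau p = p) \/ (forall p, tau p = mob S1 p) \/
   (forall p, tau p = mob S2 p) \/ (forall p, tau p = mob S3 p)).
Proof.
split.
- case=> [[a [b [c [d [hd ht]]]]] hf].
  pose T := ((a, b), (c, d)).
  have hT : mdet T != 0 by [].
  have ht' p : tau p = mob T p by rewrite ht mobius_mob.
  have key p : cr (mact T (hom p)) (mact S0 (hom p)) * cr (mact T (hom p)) (mact S1 (hom p)) *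
      cr (mact T (hom p)) (mact S2 (hom p)) * cr (mact T (hom p)) (mact S3 (hom p)) = 0.
    have := hf p; rewrite /f2 fiber ht' /mob.
    have [l [hl ->]] := hom_proj (mact_nz hT (nz_hom p)).
    rewrite !cr_scal_l => e.
    have : l ^+ 4 * (cr (mact T (hom p)) (mact S0 (hom p)) * cr (mact T (hom p)) (mact S1 (hom p)) *
      cr (mact T (hom p)) (mact S2 (hom p)) * cr (mact T (hom p)) (mact S3 (hom p))) = 0.
      by rewrite -[RHS]e; ring.
    by move/eqP; rewrite mulf_eq0 expf_eq0 (negbTE hl) andbF => /eqP.
  have := @quad4 R (qa_ T S0) (qb_ T S0) (qc_ T S0) (qa_ T S1) (qb_ T S1) (qc_ T S1)
    (qa_ T S2) (qb_ T S2) (qc_ T S2) (qa_ T S3) (qb_ T S3) (qc_ T S3).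
  case.
  + move=> z; have := key (Some z); rewrite !crTS /=.
    by rewrite !expr1n !mulr1.
  + case=> ea eb ec; left => p; rewrite ht' -[RHS](S0_id p); exact: tau_eq hT detS0 ea eb ec.
  case; [case=> ea eb ec; right; left => p; rewrite ht'; exact: tau_eq hT detS1 ea eb ec|].
  case; [case=> ea eb ec; right; right; left => p; rewrite ht'; exact: tau_eq hT detS2 ea eb ec|].
  case=> ea eb ec; right; right; right => p; rewrite ht'; exact: tau_eq hT detS3 ea eb ec.
- have hfS (S : (C * C) * (C * C)) : mdet S != 0 ->
      (S = S0 \/ S = S1 \/ S = S2 \/ S = S3) -> Deck f2 (mob S).
    move=> hS hSi; apply: deck_in => // p; rewrite /f2; apply/fiber.
    have e : cr (hom (mob S p)) (mact S (hom p)) = 0 by apply/cr_hom_mob.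
    by case: hSi e => [->|[->|[->|->]]] e; rewrite e; ring.
  have hext g : Deck f2 g -> forall t, (forall p, t p = g p) -> Deck f2 t.
    move=> [[a [b [c [d [hd ht]]]]] hf] t htg; split.
    + by exists a, b, c, d; split => // p; rewrite htg.
    + by move=> p; rewrite /f2 !htg; exact: hf.
  case => [h|[h|[h|h]]].
  + apply: (hext (mob S0)); last by move=> p; rewrite h S0_id.
    by apply: hfS; [exact: detS0 | left].
  + by apply: (hext (mob S1)) h; apply: hfS; [exact: detS1 | right; left].
  + by apply: (hext (mob S2)) h; apply: hfS; [exact: detS2 | right; right; left].
  + by apply: (hext (mob S3)) h; apply: hfS; [exact: detS3 | right; right; right].
Qed.


Lemma three (a b : sph) : exists p, p <> a /\ p <> b.
Proof.
have ne z : Some (z + 1) <> Some z :> sph.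
  by case=> /eqP; rewrite -subr_eq0 addrC addKr oner_eq0.
case: a => [z1|]; case: b => [z2|].
- by exists None.
- by exists (Some (z1 + 1)); split => //; exact: ne.
- by exists (Some (z2 + 1)); split => //; exact: ne.
- by exists (Some 0).
Qed.

Lemma main_sec : exists s1 s2 s3 : sph -> sph,
    (forall tau, Deck (fun p => qmap F (qmap F p)) tau <->
       ((forall p, tau p = p) \/ (forall p, tau p = s1 p) \/
        (forall p, tau p = s2 p) \/ (forall p, tau p = s3 p))) /\
    (exists p, s1 p <> p) /\ (exists p, s2 p <> p) /\ (exists p, s3 p <> p) /\
    (exists p, s1 p <> s2 p) /\ (exists p, s1 p <> s3 p) /\ (exists p, s2 p <> s3 p) /\
    (forall p, s1 (s1 p) = p) /\ (forall p, s2 (s2 p) = p) /\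
    (forall p, s3 (s3 p) = p) /\ (forall p, s1 (s2 p) = s3 p) /\
    (forall p, s1 p = p <-> p = c1 \/ p = c2) /\
    (forall p, s2 p = p <-> qmap F p = c1) /\
    (forall p, s3 p = p <-> qmap F p = c2).
Proof.
have n1 : exists p, mob S1 p <> p.
  have [p [h1 h2]] := three c1 c2; exists p; rewrite fix1; tauto.
have n2 : exists p, mob S2 p <> p.
  case: (eqVneq (qmap F c1) c1) => e.
  - exists c2; rewrite fix2 => e2; apply: hne; by rewrite e e2.
  - by exists c1; rewrite fix2; apply/eqP.
have n3 : exists p, mob S3 p <> p.
  case: (eqVneq (qmap F c1) c2) => e.
  - exists c2; rewrite fix3 => e2; apply: hne; by rewrite e e2.
  - by exists c1; rewrite fix3; apply/eqP.
have S13 p : mob S1 (mob S3 p) = mob S2 p by rewrite -S12 S11.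
exists (mob S1), (mob S2), (mob S3).
split; first by move=> tau; exact: deck_char.
split; first exact: n1.
split; first exact: n2.
split; first exact: n3.
split.
  case: n3 => p hp; exists p => e; apply: hp.
  by rewrite -S12 -e S11.
split.
  case: n2 => p hp; exists p => e; apply: hp.
  by rewrite -S13 -e S11.
split.
  case: n1 => p hp; exists (mob S2 p) => e; apply: hp.
  by rewrite S22 -S12 S22 in e; rewrite -e.
do 4 (split; first by [exact: S11 | exact: S22 | exact: S33 | exact: S12]).
split; first exact: fix1.
split; first exact: fix2.
exact: fix3.
Qed.

End Main.

Theorem mainTheorem15 (R : realType) (F : qrat R) (c1 c2 : sphere R) :
  is_quadratic F ->
  (forall p, is_critical F p <-> p = c1 \/ p = c2) ->
  qmap F c1 <> qmap F c2 ->
  qmap F (qmap F c1) = qmap F (qmap F c2) ->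
  exists s1 s2 s3 : sphere R -> sphere R,
    (* Deck(f^2) = {id, s1, s2, s3} *)
    (forall tau, Deck (fun p => qmap F (qmap F p)) tau <->
       ((forall p, tau p = p) \/ (forall p, tau p = s1 p) \/
        (forall p, tau p = s2 p) \/ (forall p, tau p = s3 p))) /\
    (* the four elements are pairwise distinct and form a Klein four-group *)
    (exists p, s1 p <> p) /\ (exists p, s2 p <> p) /\ (exists p, s3 p <> p) /\
    (exists p, s1 p <> s2 p) /\ (exists p, s1 p <> s3 p) /\ (exists p, s2 p <> s3 p) /\
    (forall p, s1 (s1 p) = p) /\ (forall p, s2 (s2 p) = p) /\
    (forall p, s3 (s3 p) = p) /\ (forall p, s1 (s2 p) = s3 p) /\
    (* special pairs: fixed point sets of s1, s2, s3 *)
    (forall p, s1 p = p <-> p = c1 \/ p = c2) /\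
    (forall p, s2 p = p <-> qmap F p = c1) /\
    (forall p, s3 p = p <-> qmap F p = c2).
Proof. move=> hq hcrit hne hco; exact: main_sec. Qed.
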